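(* Consider the linear time-invariant multiple-input multiple-output (LTI MIMO) state-space model $$\alpha_{k+1}=T\alpha_k+Bx_k+\eta_k,\qquad y_k=Z\alpha_k+\beta x_k+\varepsilon_k,\qquad \begin{bmatrix}\eta_k\\ \varepsilon_k\end{bmatrix}\sim\mathcal N\!\left(\begin{bmatrix}0\\0\end{bmatrix},\begin{bmatrix}Q&S\\ S^\top&H\end{bmatrix}\right),$$ with $\alpha_k\in\mathbb R^n$, $y_k\in\mathbb R^m$, $x_k\in\mathbb R^d$, $H>0$, initial state $\alpha_0\sim\mathcal N(\bar\alpha_0,\Pi_0)$ with $\Pi_0>0$, and $\overline Q:=Q-SH^{-1}S^\top\ge 0$. Let $\overline T:=T-SH^{-1}Z$, $\overline B:=B-SH^{-1}\beta$. (Conventional filter, Algorithm 1.) Set $\hat\alpha_{0|0}=\bar\alpha_0$, $P_{0|0}=\Pi_0$, and for $k=1,\dots,N$: $\hat\alpha_{k|k-1}=\overline T\hat\alpha_{k-1|k-1}+\overline Bx_{k-1}+SH^{-1}y_{k-1}$; $P_{k|k-1}=\overline TP_{k-1|k-1}\overline T^\top+\overline Q$; $R_{e,k}=ZP_{k|k-1}Z^\top+H$; $K_k=P_{k|k-1}Z^\top R_{e,k}^{-1}$; $e_k=y_k-Z\hat\alpha_{k|k-1}-\beta x_k$; $\hat\alpha_{k|k}=\hat\alpha_{k|k-1}+K_ke_k$; $P_{k|k}=(I-K_kZ)P_{k|k-1}$. (UD-based filter, Algorithm 1a.) Take $UDU^\top$ factorizations $\Pi_0=\bar U_{\Pi_0}D_{\Pi_0}\bar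 U_{\Pi_0}^\top$, $H=\bar U_HD_H\bar U_H^\top$, $\overline Q=\bar U_{\overline Q}D_{\overline Q}\bar U_{\overline Q}^\top$; set $\hat\alpha_{0|0}=\bar\alpha_0$, $\bar U_{P_{0|0}}=\bar U_{\Pi_0}$, $D_{P_{0|0}}=D_{\Pi_0}$; and for $k=1,\dots,N$: (i) $\hat\alpha_{k|k-1}=\overline T\hat\alpha_{k-1|k-1}+\overline Bx_{k-1}+SH^{-1}y_{k-1}$; (ii) apply MWGS to the pre-arrays $\mathbb A^\top=[\,\overline T\bar U_{P_{k-1|k-1}}\ \ \bar U_{\overline Q}\,]$, $\mathbb D_A=D_{P_{k-1|k-1}}\oplus D_{\overline Q}$ and set $\bar U_{P_{k|k-1}}:=\mathbb R$, $D_{P_{k|k-1}}:=\mathbb D_R$; (iii) apply MWGS to the pre-arrays $\mathbb A^\top=\begin{bmatrix}\bar U_{P_{k|k-1}}&0\\ Z\bar U_{P_{k|k-1}}&\bar U_H\end{bmatrix}$, $\mathbb D_A=D_{P_{k|k-1}}\oplus D_H$, and read off from the post-arrays $\mathbb R=\begin{bmatrix}\bar U_{P_{k|k}}&\bar K_k^u\\0&\bar U_{R_{e,k}}\end{bmatrix}$, $\mathbb D_R=D_{P_{k|k}}\oplus D_{R_{e,k}}$ (blocks partitioned conformally with sizes $n$ and $m$); (iv) $e_k=y_k-Z\hat\alpha_{k|k-1}-\beta x_k$; (v) $\hat\alpha_{k|k}=\hat\alpha_{k|k-1}+\bar K_k^u\bar U_{R_{e,k}}^{-1}e_k$. Then Algorithm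 1a is algebraically equivalent to Algorithm 1: for every $k$, the quantities computed by Algorithm 1a satisfy $\bar U_{P_{k|k-1}}D_{P_{k|k-1}}\bar U_{P_{k|k-1}}^\top=P_{k|k-1}$, $\bar U_{R_{e,k}}D_{R_{e,k}}\bar U_{R_{e,k}}^\top=R_{e,k}$, $\bar K_k^u\bar U_{R_{e,k}}^{-1}=K_k$, $\bar U_{P_{k|k}}D_{P_{k|k}}\bar U_{P_{k|k}}^\top=P_{k|k}$, and the state estimates $\hat\alpha_{k|k-1}$, $\hat\alpha_{k|k}$ coincide with those of Algorithm 1.
   Context: A $UDU^\top$ (modified Cholesky) factorization of a symmetric positive (semi)definite matrix $P$ is $P=\bar U_PD_P\bar U_P^\top$ with $\bar U_P$ upper triangular with unit diagonal and $D_P$ diagonal. For square matrices $A,B$, $A\oplus B:=\mathrm{diag}\{A,B\}$. The modified weighted Gram–Schmidt (MWGS) step: given pre-arrays $\mathbb A\in\mathbb R^{r\times s}$ ($r\ge s$) and a diagonal $\mathbb D_A\in\mathbb R^{r\times r}$, $\mathbb D_A>0$, it returns post-arrays $\mathbb R\in\mathbb R^{s\times s}$ upper triangular with unit diagonal and $\mathbb D_R\in\mathbb R^{s\times s}$ diagonal such that $\mathbb A^\top=\mathbb R\,\mathfrak W^\top$ and $\mathfrak W^\top\mathbb D_A\mathfrak W=\mathbb D_R$ for some matrix $\mathfrak W\in\mathbb R^{r\times s}$. The algorithms are considered under the assumption that every MWGS call is well defined. *)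

(* Defs.v *)
From HB Require Import structures.
From mathcomp Require Import all_boot all_order all_algebra.
Set Implicit Arguments. Unset Strict Implicit. Unset Printing Implicit Defensive.
Import Order.TTheory GRing.Theory Num.Theory.
Local Open Scope ring_scope.

Section Defs.
Variable R : realFieldType.

Definition posdef (k : nat) (M : 'M[R]_k) : Prop :=
  M^T = M /\ forall v : 'cV[R]_k, v != 0 -> 0 < (v^T *m M *m v) ord0 ord0.

Definition possemidef (k : nat) (M : 'M[R]_k) : Prop :=
  M^T = M /\ forall v : 'cV[R]_k, 0 <= (v^T *m M *m v) ord0 ord0.

Definition is_diag (k : nat) (M : 'M[R]_k) : Prop :=
  forall i j : 'I_k, i != j -> M i j = 0.

Definition unit_upper (k : nat) (U : 'M[R]_k) : Prop :=
  (forall i j : 'I_k, (j < i)%N -> U i j = 0) /\ (forall i : 'I_k, U i i = 1).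

Definition UDU_fact (k : nat) (P U D : 'M[R]_k) : Prop :=
  unit_upper U /\ is_diag D /\ P = U *m D *m U^T.

Definition MWGS (r s : nat) (A : 'M[R]_(r, s)) (DA : 'M[R]_r)
    (Rm DR : 'M[R]_s) : Prop :=
  is_diag DA /\ (forall i : 'I_r, 0 < DA i i) /\
  unit_upper Rm /\ is_diag DR /\
  exists W : 'M[R]_(r, s), A^T = Rm *m W^T /\ W^T *m DA *m W = DR.

Definition dsum (p q : nat) (A : 'M[R]_p) (B : 'M[R]_q) : 'M[R]_(p + q) :=
  block_mx A 0 0 B.

Variables (n m d : nat).

Definition Tbar (T : 'M[R]_n) (S : 'M[R]_(n, m)) (H : 'M[R]_m)
  (Z : 'M[R]_(m, n)) : 'M[R]_n := T - S *m invmx H *m Z.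
Definition Bbar (B : 'M[R]_(n, d)) (S : 'M[R]_(n, m)) (H : 'M[R]_m)
  (beta : 'M[R]_(m, d)) : 'M[R]_(n, d) := B - S *m invmx H *m beta.
Definition Qbar (Q : 'M[R]_n) (S : 'M[R]_(n, m)) (H : 'M[R]_m) : 'M[R]_n :=
  Q - S *m invmx H *m S^T.

Section Filters.
Variables (T : 'M[R]_n) (B : 'M[R]_(n, d)) (Z : 'M[R]_(m, n))
  (beta : 'M[R]_(m, d)) (Q : 'M[R]_n) (S : 'M[R]_(n, m)) (H : 'M[R]_m)
  (x : nat -> 'cV[R]_d) (y : nat -> 'cV[R]_m).

(* time update of the estimate, from filtered estimate a at time j to j+1 *)
Definition pred_est (a : 'cV[R]_n) (j : nat) : 'cV[R]_n :=
  Tbar T S H Z *m a + Bbar B S H beta *m x j + S *m invmx H *m y j.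

Definition pred_cov (P : 'M[R]_n) : 'M[R]_n :=
  Tbar T S H Z *m P *m (Tbar T S H Z)^T + Qbar Q S H.

Definition innov_cov (Pp : 'M[R]_n) : 'M[R]_m := Z *m Pp *m Z^T + H.

Definition gain (Pp : 'M[R]_n) : 'M[R]_(n, m) := Pp *m Z^T *m invmx (innov_cov Pp).

Definition innov (ap : 'cV[R]_n) (k : nat) : 'cV[R]_m :=
  y k - Z *m ap - beta *m x k.

Fixpoint kf (a0 : 'cV[R]_n) (Pi0 : 'M[R]_n) (k : nat) : 'cV[R]_n * 'M[R]_n :=
  match k with
  | 0 => (a0, Pi0)
  | j.+1 =>
      let ap := pred_est (kf a0 Pi0 j).1 j in
      let Pp := pred_cov (kf a0 Pi0 j).2 in
      (ap + gain Pp *m innov ap j.+1, (1%:M - gain Pp *m Z) *m Pp)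
  end.

Definition kf_filt_est a0 Pi0 k : 'cV[R]_n := (kf a0 Pi0 k).1.
Definition kf_filt_cov a0 Pi0 k : 'M[R]_n := (kf a0 Pi0 k).2.
(* for k >= 1 : alpha_{k|k-1}, P_{k|k-1}, R_{e,k}, K_k *)
Definition kf_pred_est a0 Pi0 k : 'cV[R]_n := pred_est (kf_filt_est a0 Pi0 k.-1) k.-1.
Definition kf_pred_cov a0 Pi0 k : 'M[R]_n := pred_cov (kf_filt_cov a0 Pi0 k.-1).
Definition kf_Re a0 Pi0 k : 'M[R]_m := innov_cov (kf_pred_cov a0 Pi0 k).
Definition kf_K a0 Pi0 k : 'M[R]_(n, m) := gain (kf_pred_cov a0 Pi0 k).

(* ---------- Algorithm 1a (UD-based filter) ----------
   The MWGS outputs of step (iii) at time k are R3 k, DR3 k : 'M_(n+m);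
   blocks read off conformally with sizes n and m. *)
Variables (R3 DR3 : nat -> 'M[R]_(n + m)).

Definition ud_Ufilt (UPi0 : 'M[R]_n) (k : nat) : 'M[R]_n :=
  if k is 0 then UPi0 else ulsubmx (R3 k).
Definition ud_Dfilt (DPi0 : 'M[R]_n) (k : nat) : 'M[R]_n :=
  if k is 0 then DPi0 else ulsubmx (DR3 k).
Definition ud_Kbar (k : nat) : 'M[R]_(n, m) := ursubmx (R3 k).
Definition ud_URe (k : nat) : 'M[R]_m := drsubmx (R3 k).
Definition ud_DRe (k : nat) : 'M[R]_m := drsubmx (DR3 k).

Fixpoint ud_filt_est (a0 : 'cV[R]_n) (k : nat) : 'cV[R]_n :=
  match k with
  | 0 => a0
  | j.+1 =>
      let ap := pred_est (ud_filt_est a0 j) j in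
      ap + ud_Kbar j.+1 *m invmx (ud_URe j.+1) *m innov ap j.+1
  end.

(* predicted estimate alpha_{k|k-1} of Algorithm 1a, k >= 1 *)
Definition ud_pred_est (a0 : 'cV[R]_n) (k : nat) : 'cV[R]_n :=
  pred_est (ud_filt_est a0 k.-1) k.-1.

Definition preA2 (UPi0 UQb : 'M[R]_n) (k : nat) : 'M[R]_(n + n, n) :=
  (row_mx (Tbar T S H Z *m ud_Ufilt UPi0 k.-1) UQb)^T.
Definition preD2 (DPi0 DQb : 'M[R]_n) (k : nat) : 'M[R]_(n + n) :=
  dsum (ud_Dfilt DPi0 k.-1) DQb.

Definition preA3 (Up : 'M[R]_n) (UH : 'M[R]_m) : 'M[R]_(n + m, n + m) :=
  (block_mx Up 0 (Z *m Up) UH)^T.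
Definition preD3 (Dp : 'M[R]_n) (DH : 'M[R]_m) : 'M[R]_(n + m) := dsum Dp DH.

End Filters.
End Defs.

(* Main.v *)
Require Import Defs.
From HB Require Import structures.
From mathcomp Require Import all_boot all_order all_algebra.
From mathcomp Require Import zify ring lra.
Import Order.TTheory GRing.Theory Num.Theory.
Set Implicit Arguments. Unset Strict Implicit. Unset Printing Implicit Defensive.
Local Open Scope ring_scope.

Section Aux.
Variable R : realFieldType.

Lemma uu_unit k (U : 'M[R]_k) : unit_upper U -> U \in unitmx.
Proof.
move=> [Hl Hd]; rewrite unitmxE -det_tr det_trig.
  by rewrite big1 ?unitr1 // => i _; rewrite mxE Hd.
by apply/is_trig_mxP => i j ij; rewrite mxE Hl.
Qed.

Lemma uu_dl p q (M : 'M[R]_(p + q)) : unit_upper M -> dlsubmx M = 0.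
Proof.
move=> [Hl _]; apply/matrixP => i j; rewrite !mxE Hl //=.
by rewrite (leq_trans (ltn_ord j)) // leq_addr.
Qed.

Lemma uu_dr p q (M : 'M[R]_(p + q)) : unit_upper M -> unit_upper (drsubmx M).
Proof.
move=> [Hl Hd]; split=> [i j ij|i]; rewrite !mxE ?Hd //; apply: Hl => /=.
by rewrite ltn_add2l.
Qed.

Lemma diag_ur p q (M : 'M[R]_(p + q)) : is_diag M -> ursubmx M = 0.
Proof.
move=> Hd; apply/matrixP => i j; rewrite !mxE Hd //.
apply/eqP => /(congr1 val) /= E; move: (ltn_ord i); rewrite E; lia.
Qed.

Lemma diag_dl p q (M : 'M[R]_(p + q)) : is_diag M -> dlsubmx M = 0.
Proof.
move=> Hd; apply/matrixP => i j; rewrite !mxE Hd //.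
apply/eqP => /(congr1 val) /= E; move: (ltn_ord j); rewrite -E; lia.
Qed.

Lemma diag_tr k (D : 'M[R]_k) : is_diag D -> D^T = D.
Proof.
move=> Hd; apply/matrixP => i j; rewrite mxE.
case: (eqVneq i j) => [->//|ij]; by rewrite (Hd i j) // (Hd j i) // eq_sym.
Qed.

Lemma diag_psd k (D : 'M[R]_k) (w : 'cV[R]_k) : is_diag D ->
  (forall i, 0 <= D i i) -> 0 <= (w^T *m D *m w) ord0 ord0.
Proof.
move=> Hd Hp; rewrite mxE; apply: sumr_ge0 => j _; rewrite mxE.
rewrite (bigD1 j) //= big1 ?addr0; last first.
  by move=> i ij; rewrite Hd ?mulr0.
rewrite mxE [_ * D j j]mulrC -mulrA; apply: mulr_ge0 => //.
by rewrite -expr2 sqr_ge0.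
Qed.

Lemma mwgs_eq r s (A : 'M[R]_(r, s)) DA Rm DR : MWGS A DA Rm DR ->
  A^T *m DA *m A = Rm *m DR *m Rm^T.
Proof.
move=> [_ [_ [_ [_ [W [EA ED]]]]]].
have EA' : A = W *m Rm^T by rewrite -[A]trmxK EA trmx_mul trmxK.
by rewrite {1}EA {}EA' -ED !mulmxA.
Qed.

Lemma mwgs_psd r s (A : 'M[R]_(r, s)) DA Rm DR : MWGS A DA Rm DR ->
  forall v : 'cV_s, 0 <= (v^T *m DR *m v) ord0 ord0.
Proof.
move=> [Hd [Hp [_ [_ [W [_ ED]]]]]] v.
have -> : v^T *m DR *m v = (W *m v)^T *m DA *m (W *m v).
  by rewrite -ED trmx_mul !mulmxA.
by apply: diag_psd => // i; apply/ltW.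
Qed.


Lemma pd_unit k (M : 'M[R]_k) :
  (forall v : 'cV_k, v != 0 -> 0 < (v^T *m M *m v) ord0 ord0) -> M \in unitmx.
Proof.
move=> Hp; rewrite unitmxE unitfE; apply/negP => /det0P [v nz vM].
have nz' : v^T != 0.
  by apply: contra nz => /eqP E; rewrite -[v]trmxK E trmx0.
by have := Hp _ nz'; rewrite trmxK vM mul0mx mxE ltxx.
Qed.

Variables (n m : nat).

Lemma step (T : 'M[R]_n) (Z : 'M[R]_(m, n)) (Q : 'M[R]_n) (S : 'M[R]_(n, m))
  (H : 'M[R]_m) (HH : posdef H) (UH DH : 'M[R]_m) (fH : UDU_fact H UH DH)
  (UQb DQb : 'M[R]_n) (fQb : UDU_fact (Qbar Q S H) UQb DQb)
  (Pf Uf Df Up Dp : 'M[R]_n) (Hf : Uf *m Df *m Uf^T = Pf) (R3 DR3 : 'M[R]_(n + m))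
  (s2 : MWGS (row_mx (Tbar T S H Z *m Uf) UQb)^T (dsum Df DQb) Up Dp)
  (s3 : MWGS (preA3 Z Up UH) (preD3 Dp DH) R3 DR3) :
  let Pp := pred_cov T Z Q S H Pf in
  [/\ Up *m Dp *m Up^T = Pp,
     drsubmx R3 *m drsubmx DR3 *m (drsubmx R3)^T = innov_cov Z H Pp,
     ursubmx R3 *m invmx (drsubmx R3) = gain Z H Pp
   & ulsubmx R3 *m ulsubmx DR3 *m (ulsubmx R3)^T = (1%:M - gain Z H Pp *m Z) *m Pp].
Proof.
move=> Pp.
have E2 := mwgs_eq s2.
rewrite trmxK /dsum tr_row_mx mul_row_block !mulmx0 addr0 add0r mul_row_col in E2.
have EPp : Up *m Dp *m Up^T = Pp.
  rewrite -E2 /Pp /pred_cov -Hf; case: fQb => _ [_ ->].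
  by rewrite !trmx_mul !mulmxA.
have E3 := mwgs_eq s3.
rewrite /preA3 /preD3 /dsum trmxK tr_block_mx !mulmx_block in E3.
rewrite !mulmx0 !mul0mx !addr0 !add0r trmx0 !mulmx0 !addr0 in E3.
have [uR3 [dR3 _]] := s3.2.2.
have eR3 : R3 = block_mx (ulsubmx R3) (ursubmx R3) 0 (drsubmx R3).
  by rewrite -(uu_dl uR3) submxK.
have eDR3 : DR3 = block_mx (ulsubmx DR3) 0 0 (drsubmx DR3).
  by rewrite -(diag_ur dR3) -(diag_dl dR3) submxK.
set Uf' := ulsubmx R3 in eR3 *; set Kb := ursubmx R3 in eR3 *;
set URe := drsubmx R3 in eR3 *; set Df' := ulsubmx DR3 in eDR3 *;
set DRe := drsubmx DR3 in eDR3 *.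
rewrite {}eR3 {}eDR3 tr_block_mx !mulmx_block !mulmx0 !mul0mx ?addr0 ?add0r ?trmx0 ?mulmx0 ?mul0mx ?addr0 ?add0r in E3.
move/eq_block_mx: E3 => [e1 e2 e3 e4].
have e4' : URe *m DRe *m URe^T = innov_cov Z H Pp.
  by rewrite -e4 /innov_cov -EPp trmx_mul !mulmxA; case: fH => _ [_ ->].
have e2' : Kb *m DRe *m URe^T = Pp *m Z^T.
  by rewrite -e2 -EPp trmx_mul !mulmxA.
have e3' : Z *m Pp = URe *m DRe *m Kb^T by rewrite -EPp !mulmxA e3.
have Ppsd : forall w : 'cV[R]_n, 0 <= (w^T *m Pp *m w) ord0 ord0.
  move=> w; rewrite -EPp.
  have -> : w^T *m (Up *m Dp *m Up^T) *m w = (Up^T *m w)^T *m Dp *m (Up^T *m w).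
    by rewrite trmx_mul trmxK !mulmxA.
  exact: (mwgs_psd s2).
have ReU : innov_cov Z H Pp \in unitmx.
  apply: pd_unit => v nz; rewrite /innov_cov mulmxDr mulmxDl mxE.
  have := HH.2 v nz; have := Ppsd (Z^T *m v).
  rewrite trmx_mul trmxK !mulmxA => h1 h2; lra.
have UReU : URe \in unitmx by apply: uu_unit; apply: uu_dr.
have EK1 : Kb *m invmx URe *m innov_cov Z H Pp = Pp *m Z^T.
  by rewrite -e4' !mulmxA mulmxKV.
have Kdef : Kb *m invmx URe = gain Z H Pp.
  by rewrite /gain -EK1 mulmxK.
have EK : gain Z H Pp *m Z *m Pp = Kb *m DRe *m Kb^T.
  by rewrite -Kdef -mulmxA e3' !mulmxA mulmxKV.
split => //.
by rewrite mulmxBl mul1mx EK -EPp e1 addrK.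

Qed.
End Aux.
Theorem proposition1 (R : realFieldType) (n m d N : nat)
  (T : 'M[R]_n) (B : 'M[R]_(n, d)) (Z : 'M[R]_(m, n)) (beta : 'M[R]_(m, d))
  (Q : 'M[R]_n) (S : 'M[R]_(n, m)) (H : 'M[R]_m)
  (abar0 : 'cV[R]_n) (Pi0 : 'M[R]_n)
  (x : nat -> 'cV[R]_d) (y : nat -> 'cV[R]_m)
  (* model assumptions *)
  (HQS : possemidef (block_mx Q S S^T H))
  (HH : posdef H) (HPi0 : posdef Pi0) (HQb : possemidef (Qbar Q S H))
  (* UDU^T factorizations used by Algorithm 1a *)
  (UPi0 DPi0 : 'M[R]_n) (UH DH : 'M[R]_m) (UQb DQb : 'M[R]_n)
  (fPi0 : UDU_fact Pi0 UPi0 DPi0) (fH : UDU_fact H UH DH)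
  (fQb : UDU_fact (Qbar Q S H) UQb DQb)
  (* MWGS outputs of steps (ii) and (iii) of Algorithm 1a *)
  (Up Dp : nat -> 'M[R]_n) (R3 DR3 : nat -> 'M[R]_(n + m))
  (step2 : forall k, (1 <= k <= N)%N ->
     MWGS (preA2 T Z S H R3 UPi0 UQb k) (preD2 DR3 DPi0 DQb k) (Up k) (Dp k))
  (step3 : forall k, (1 <= k <= N)%N ->
     MWGS (preA3 Z (Up k) UH) (preD3 (Dp k) DH) (R3 k) (DR3 k)) :
  forall k, (1 <= k <= N)%N ->
    [/\ Up k *m Dp k *m (Up k)^T = kf_pred_cov T B Z beta Q S H x y abar0 Pi0 k,
        ud_URe R3 k *m ud_DRe DR3 k *m (ud_URe R3 k)^T
          = kf_Re T B Z beta Q S H x y abar0 Pi0 k,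
        ud_Kbar R3 k *m invmx (ud_URe R3 k) = kf_K T B Z beta Q S H x y abar0 Pi0 k,
        ud_Ufilt R3 UPi0 k *m ud_Dfilt DR3 DPi0 k *m (ud_Ufilt R3 UPi0 k)^T
          = kf_filt_cov T B Z beta Q S H x y abar0 Pi0 k
      & ud_pred_est T B Z beta S H x y R3 abar0 k
          = kf_pred_est T B Z beta Q S H x y abar0 Pi0 k /\
        ud_filt_est T B Z beta S H x y R3 abar0 k
          = kf_filt_est T B Z beta Q S H x y abar0 Pi0 k].
Proof.
move=> k hk.
pose Uf j := ud_Ufilt R3 UPi0 j; pose Df j := ud_Dfilt DR3 DPi0 j.
have ST : forall j, (j < N)%N ->
    Uf j *m Df j *m (Uf j)^T = kf_filt_cov T B Z beta Q S H x y abar0 Pi0 j ->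
    let Pp := pred_cov T Z Q S H (kf_filt_cov T B Z beta Q S H x y abar0 Pi0 j) in
  [/\ Up j.+1 *m Dp j.+1 *m (Up j.+1)^T = Pp,
     drsubmx (R3 j.+1) *m drsubmx (DR3 j.+1) *m (drsubmx (R3 j.+1))^T = innov_cov Z H Pp,
     ursubmx (R3 j.+1) *m invmx (drsubmx (R3 j.+1)) = gain Z H Pp
   & ulsubmx (R3 j.+1) *m ulsubmx (DR3 j.+1) *m (ulsubmx (R3 j.+1))^T
       = (1%:M - gain Z H Pp *m Z) *m Pp].
  move=> j hj Hf; apply: (step HH fH fQb Hf).
    by apply: (step2 j.+1); rewrite ltnS hj.
  by apply: (step3 j.+1); rewrite ltnS hj.
have C : forall j, (j <= N)%N ->
    Uf j *m Df j *m (Uf j)^T = kf_filt_cov T B Z beta Q S H x y abar0 Pi0 j /\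
    ud_filt_est T B Z beta S H x y R3 abar0 j = kf_filt_est T B Z beta Q S H x y abar0 Pi0 j.
  elim=> [|j IH] hj.
    by split => //; case: fPi0 => _ [_ ->].
  have [IH1 IH2] := IH (ltnW hj).
  have [_ _ e3 e4] := ST j hj IH1.
  split; first exact: e4.
  rewrite /= IH2 e3; done.
case: k hk => [//|j] /andP [_ hj].
have [C1 C2] := C j (ltnW hj).
have [e1 e2 e3 e4] := ST j hj C1.
split => //.
split; first by rewrite /ud_pred_est /kf_pred_est /= C2.
by have [] := C j.+1 hj.
Qed.
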